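(* Let $\varphi$ be a finite conjunction of literals of the two forms $x\in y$ and $x = y\setminus z$ (with $x,y,z$ set variables), with finite set of variables $\mathrm{Vars}(\varphi)$. Let $M$ be a set assignment over $\mathrm{Vars}(\varphi)$ satisfying $\varphi$; let $\bar x,\bar y\in\mathrm{Vars}(\varphi)$, let $\overline{M}$ be a set assignment over $\mathrm{Vars}(\varphi)$ satisfying $\varphi$ with $\overline{M}\bar x\neq \overline{M}\bar y$, and let $\mathfrak{t}$ be a set belonging to exactly one of $\overline{M}\bar x$, $\overline{M}\bar y$. Fix a set $\mathfrak{s}$ with $\mathrm{rk}(\mathfrak{s})>\mathrm{rk}(M)$. Define $\mathsf{V}_0=\{u\in\mathrm{Vars}(\varphi)\mid \mathfrak{t}\in\overline{M}u\}$; $\mathsf{V}_n=\{u\in\mathrm{Vars}(\varphi)\mid Mu\cap\{Mw\mid w\in\mathsf{V}_{n-1}\}\neq\emptyset\}$ for $n\ge1$; $M_0v=Mv\cup\{\mathfrak{s}\}$ if $v\in\mathsf{V}_0$ and $M_0v=Mv$ otherwise; for $n\ge1$, $M_nv=M_{n-1}v\cup\{M_{n-1}u\mid u\in\mathsf{V}_{n-1},\ Mu\in Mv\}$ if $v\in\mathsf{V}_n$ and $M_nv=M_{n-1}v$ otherwise. Then for all $n\in\mathbb{N}$ and $v\in\mathrm{Vars}(\varphi)$: if $v\in\mathsf{V}_n$ then $\mathrm{rk}(M_nv)=\mathrm{rk}(\mathfrak{s})+n+1$, and if $v\notin\mathsf{V}_n$ then $\mathrm{rk}(M_nv)\le\m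athrm{rk}(\mathfrak{s})+n$.
   Context: A set assignment is a map from a finite set of set variables into the von Neumann universe $\mathcal{V}=\bigcup_\alpha\mathcal{V}_\alpha$, $\mathcal{V}_\alpha=\bigcup_{\beta<\alpha}\mathcal{P}(\mathcal{V}_\beta)$; it satisfies $x\in y$ iff $Mx\in My$ and $x=y\setminus z$ iff $Mx=My\setminus Mz$. The rank $\mathrm{rk}(s)$ of a set $s$ is the least ordinal $\alpha$ with $s\subseteq\mathcal{V}_\alpha$, and $\mathrm{rk}(M)=\max\{\mathrm{rk}(Mx)\mid x\in\mathrm{dom}(M)\}$. Addition of ranks and natural numbers is ordinal addition. *)

(* Defs.v *)
(* The von Neumann universe is modelled by Aczel's
   well-founded sets (W-type of sets indexed by types), with extensional
   equality [eqV] and membership [mem]. *)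
From Stdlib Require Import List ClassicalEpsilon ClassicalDescription.
Import ListNotations.

Inductive V : Type := sup : forall A : Type, (A -> V) -> V.

Definition idx (x : V) : Type := match x with sup A _ => A end.
Definition el (x : V) : idx x -> V := match x with sup _ f => f end.

Fixpoint eqV (x y : V) : Prop :=
  match x with
  | sup A f => match y with
    | sup B g => (forall a, exists b, eqV (f a) (g b)) /\
                 (forall b, exists a, eqV (f a) (g b))
    end
  end.

Definition mem (x y : V) : Prop := exists b : idx y, eqV x (el y b).

Definition subset (x y : V) : Prop := forall t, mem t x -> mem t y.

Definition emptyset : V := sup False (fun e => match e with end).
Definition single (x : V) : V := sup unit (fun _ => x).
Definition union (x y : V) : V :=
  sup (idx x + idx y) (fun p => match p with inl a => el x a | inr b => el y b end).
Definition setdiff (y z : V) : V :=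
  sup {b : idx y | ~ mem (el y b) z} (fun b => el y (proj1_sig b)).
Definition powerset (x : V) : V :=
  sup (idx x -> Prop) (fun P => sup {a : idx x | P a} (fun a => el x (proj1_sig a))).
Definition bigunion (x : V) : V :=
  sup {a : idx x & idx (el x a)} (fun p => el (el x (projT1 p)) (projT2 p)).

Fixpoint Vstage (a : V) : V :=
  match a with
  | sup A f => bigunion (sup A (fun i => powerset (Vstage (f i))))
  end.

(* von Neumann ordinals: transitive sets (strictly) well-ordered by ∈
   (well-foundedness is automatic for these sets) *)
Definition transitive (x : V) : Prop := forall y, mem y x -> subset y x.
Definition Ordinal (a : V) : Prop :=
  transitive a /\
  (forall x, mem x a -> ~ mem x x) /\
  (forall x y z, mem x a -> mem y a -> mem z a -> mem x y -> mem y z -> mem x z) /\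
  (forall x y, mem x a -> mem y a -> mem x y \/ eqV x y \/ mem y x).

Definition olt (a b : V) : Prop := mem a b.
Definition ole (a b : V) : Prop := mem a b \/ eqV a b.

Definition IsRank (s a : V) : Prop :=
  Ordinal a /\ subset s (Vstage a) /\
  (forall b, Ordinal b -> subset s (Vstage b) -> ole a b).
Definition rk (s : V) : V := epsilon (inhabits emptyset) (IsRank s).

Definition osucc (a : V) : V := union a (single a).
Fixpoint oadd (a : V) (n : nat) : V :=
  match n with 0 => a | S m => osucc (oadd a m) end.

Inductive lit : Type :=
| LIn : nat -> nat -> lit
| LDiff : nat -> nat -> nat -> lit.

Definition lit_vars (l : lit) : list nat :=
  match l with LIn x y => [x; y] | LDiff x y z => [x; y; z] end.

Definition Vars (phi : list lit) (u : nat) : Prop :=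
  exists l, In l phi /\ In u (lit_vars l).

Definition sat_lit (M : nat -> V) (l : lit) : Prop :=
  match l with
  | LIn x y => mem (M x) (M y)
  | LDiff x y z => eqV (M x) (setdiff (M y) (M z))
  end.

Definition satisfies (M : nat -> V) (phi : list lit) : Prop :=
  forall l, In l phi -> sat_lit M l.

Fixpoint Vn (phi : list lit) (M Mbar : nat -> V) (t : V) (n : nat) : nat -> Prop :=
  match n with
  | 0 => fun u => Vars phi u /\ mem t (Mbar u)
  | S m => fun u => Vars phi u /\
      exists e, mem e (M u) /\ exists w, Vn phi M Mbar t m w /\ eqV e (M w)
  end.

Fixpoint Mn (phi : list lit) (M Mbar : nat -> V) (t s : V) (n : nat) : nat -> V :=
  match n with
  | 0 => fun v =>
      if excluded_middle_informative (Vn phi M Mbar t 0 v)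
      then union (M v) (single s) else M v
  | S m => fun v =>
      if excluded_middle_informative (Vn phi M Mbar t (S m) v)
      then union (Mn phi M Mbar t s m v)
             (sup {u : nat | Vn phi M Mbar t m u /\ mem (M u) (M v)}
                  (fun u => Mn phi M Mbar t s m (proj1_sig u)))
      else Mn phi M Mbar t s m v
  end.

(* Main.v *)
Require Import Defs.
From Stdlib Require Import List ClassicalEpsilon ClassicalDescription.
From Stdlib Require Import Classical Setoid.

Lemma eqV_refl : forall x, eqV x x.
Proof. induction x as [A f IH]; simpl; split; intro a; exists a; apply IH. Qed.

Lemma eqV_sym : forall x y, eqV x y -> eqV y x.
Proof.
  induction x as [A f IH]; intros [B g] [H1 H2]; simpl; split.
  - intro b. destruct (H2 b) as [a Ha]. exists a. apply IH; exact Ha.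
  - intro a. destruct (H1 a) as [b Hb]. exists b. apply IH; exact Hb.
Qed.

Lemma eqV_trans : forall x y z, eqV x y -> eqV y z -> eqV x z.
Proof.
  induction x as [A f IH]; intros [B g] [C h] [H1 H2] [H3 H4]; simpl; split.
  - intro a. destruct (H1 a) as [b Hb]. destruct (H3 b) as [c Hc]. exists c. eapply IH; eauto.
  - intro c. destruct (H4 c) as [b Hb]. destruct (H2 b) as [a Ha]. exists a. eapply IH; eauto.
Qed.

Lemma mem_sup : forall t A (f : A -> V), mem t (sup A f) <-> exists a, eqV t (f a).
Proof. intros; unfold mem; simpl; split; auto. Qed.

Lemma eqV_ext : forall x y, eqV x y <-> (forall t, mem t x <-> mem t y).
Proof.
  intros [A f] [B g]. unfold mem; simpl. split.
  - intros [H1 H2] t; split; intros [a Ha].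
    + destruct (H1 a) as [b Hb]; exists b; eapply eqV_trans; eauto.
    + destruct (H2 a) as [a' Ha']; exists a'. eapply eqV_trans; [exact Ha| apply eqV_sym; exact Ha'].
  - intros H; split.
    + intro a. destruct (proj1 (H (f a)) (ex_intro _ a (eqV_refl _))) as [b Hb]. exists b; exact Hb.
    + intro b. destruct (proj2 (H (g b)) (ex_intro _ b (eqV_refl _))) as [a Ha]. exists a; apply eqV_sym; exact Ha.
Qed.

Lemma mem_eqV_l : forall x x' y, eqV x x' -> mem x y -> mem x' y.
Proof. intros x x' y E [b Hb]. exists b. eapply eqV_trans; [apply eqV_sym; exact E | exact Hb]. Qed.

Lemma mem_eqV_r : forall x y y', eqV y y' -> mem x y -> mem x y'.
Proof. intros x y y' E H. exact (proj1 (proj1 (eqV_ext y y') E x) H). Qed.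

Lemma subset_eqV : forall x x' y y', eqV x x' -> eqV y y' -> subset x y -> subset x' y'.
Proof.
  intros x x' y y' E1 E2 H t Ht. apply mem_eqV_r with y; auto. apply H.
  apply mem_eqV_r with x'; auto. apply eqV_sym; auto.
Qed.

Lemma mem_ind (P : V -> Prop) : (forall y, (forall x, mem x y -> P x) -> P y) -> forall y, P y.
Proof.
  intros H y. assert (forall z, eqV z y -> P z) as K.
  { induction y as [A f IH]. intros z Hz. apply H. intros x Hx.
    apply (mem_eqV_r _ _ _ Hz) in Hx. destruct Hx as [a Ha]. apply (IH a). exact Ha. }
  apply K, eqV_refl.
Qed.

Lemma mem_union t x y : mem t (union x y) <-> mem t x \/ mem t y.
Proof.
  unfold mem, union; simpl. split.
  - intros [[a|b] H]; [left|right]; eexists; exact H.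
  - intros [[a H]|[b H]]; [exists (inl a)|exists (inr b)]; exact H.
Qed.

Lemma mem_single t x : mem t (single x) <-> eqV t x.
Proof. unfold mem, single; simpl; split; [intros [_ H]; exact H | intro H; exists tt; exact H]. Qed.

Lemma mem_bigunion t X : mem t (bigunion X) <-> exists c, mem c X /\ mem t c.
Proof.
  unfold bigunion. rewrite mem_sup. split.
  - intros [[a b] H]. exists (el X a). split. exists a; apply eqV_refl. exists b. exact H.
  - intros [c [[a Ha] Htc]]. pose proof (mem_eqV_r _ _ _ Ha Htc) as [b Hb].
    exists (existT _ a b). exact Hb.
Qed.

Lemma mem_powerset t x : mem t (powerset x) <-> subset t x.
Proof.
  unfold powerset. rewrite mem_sup. split.
  - intros [P HP] u Hu. pose proof (mem_eqV_r _ _ _ HP Hu) as [[a Ha] Hua]. exists a. exact Hua.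
  - intros Hsub. exists (fun a => mem (el x a) t). apply eqV_ext. intro u. split.
    + intros Hu. destruct (Hsub u Hu) as [a Ha].
      exists (exist (fun a => mem (el x a) t) a (mem_eqV_l _ _ _ Ha Hu)). exact Ha.
    + intros [[a Ha] Hua]. simpl in Hua. apply mem_eqV_l with (el x a).
      apply eqV_sym; exact Hua. exact Ha.
Qed.

Lemma mem_Vstage_sup t A (f : A -> V) :
  mem t (Vstage (sup A f)) <-> exists i, subset t (Vstage (f i)).
Proof.
  simpl. rewrite mem_bigunion. split.
  - intros [c [[i Hi] Htc]]. exists i. apply mem_powerset. apply mem_eqV_r with c; auto.
  - intros [i Hi]. exists (powerset (Vstage (f i))). split.
    exists i. apply eqV_refl. apply mem_powerset; auto.
Qed.

Lemma Vstage_eqV : forall a b, eqV a b -> eqV (Vstage a) (Vstage b).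
Proof.
  induction a as [A f IH]; intros [B g] Hab. apply eqV_ext; intro t.
  rewrite !mem_Vstage_sup. destruct Hab as [H1 H2]. split.
  - intros [i Hi]. destruct (H1 i) as [j Hj]. exists j.
    eapply subset_eqV; [apply eqV_refl | apply IH; exact Hj | exact Hi].
  - intros [j Hj]. destruct (H2 j) as [i Hi]. exists i.
    eapply subset_eqV; [apply eqV_refl | apply eqV_sym, IH; exact Hi | exact Hj].
Qed.

Lemma mem_Vstage t a : mem t (Vstage a) <-> exists c, mem c a /\ subset t (Vstage c).
Proof.
  destruct a as [A f]. rewrite mem_Vstage_sup. split.
  - intros [i Hi]. exists (f i). split; [exists i; apply eqV_refl | exact Hi].
  - intros [c [[i Hi] Hs]]. exists i.
    eapply subset_eqV; [apply eqV_refl| apply Vstage_eqV; exact Hi | exact Hs].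
Qed.

Lemma Ord_eqV a a' : eqV a a' -> Ordinal a -> Ordinal a'.
Proof.
  intros E [Ht [Hi [Htr Htri]]]. assert (E' := eqV_sym _ _ E).
  assert (tr : forall x, mem x a' -> mem x a) by (intros x h; exact (mem_eqV_r _ _ _ E' h)).
  split; [|split; [|split]].
  - intros y Hy z Hz. apply mem_eqV_r with a; auto. exact (Ht y (tr y Hy) z Hz).
  - intros x Hx. apply Hi. auto.
  - intros x y z Hx Hy Hz. apply Htr; auto.
  - intros x y Hx Hy. apply Htri; auto.
Qed.

Lemma Ord_trans a x y : Ordinal a -> mem x y -> mem y a -> mem x a.
Proof. intros [Ht _] H1 H2. exact (Ht y H2 x H1). Qed.

Lemma Ord_elem a x : Ordinal a -> mem x a -> Ordinal x.
Proof.
  intros Ha Hx. pose proof Ha as [Ht [Hi [Htr Htri]]].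
  assert (sx : forall y, mem y x -> mem y a) by (intros; eapply Ord_trans; eauto).
  split; [|split;[|split]].
  - intros y Hy z Hz. apply (Htr z y x); auto. apply (Ord_trans a z y Ha Hz (sx y Hy)).
  - intros y Hy. apply Hi. auto.
  - intros y z w Hy Hz Hw. apply Htr; auto.
  - intros y z Hy Hz. apply Htri; auto.
Qed.

Lemma Ord_irrefl a : Ordinal a -> ~ mem a a.
Proof. intros [_ [Hi _]] H. exact (Hi a H H). Qed.

Lemma Ord_tri : forall a b, Ordinal a -> Ordinal b -> mem a b \/ eqV a b \/ mem b a.
Proof.
  intro a; pattern a; apply mem_ind; clear a; intros a IHa b.
  pattern b; apply mem_ind; clear b; intros b IHb Ha Hb.
  destruct (classic (mem a b)) as [H1|H1]; [left; exact H1|].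
  destruct (classic (mem b a)) as [H2|H2]; [right; right; exact H2|].
  right; left. apply eqV_ext; intro t; split; intro Ht.
  - assert (Ot : Ordinal t) by exact (Ord_elem a t Ha Ht).
    destruct (IHa t Ht b Ot Hb) as [H|[H|H]]; [exact H| |].
    + exfalso; apply H2; eapply mem_eqV_l; eauto.
    + exfalso; apply H2; eapply Ord_trans; eauto.
  - assert (Ot : Ordinal t) by exact (Ord_elem b t Hb Ht).
    destruct (IHb t Ht Ha Ot) as [H|[H|H]]; [| |exact H].
    + exfalso; apply H1; eapply Ord_trans; eauto.
    + exfalso; apply H1; eapply mem_eqV_l; [apply eqV_sym; exact H|exact Ht].
Qed.

Lemma Ord_sub a b : Ordinal a -> Ordinal b -> subset a b -> ole a b.
Proof.
  intros Ha Hb Hs. destruct (Ord_tri a b Ha Hb) as [H|[H|H]]; [left; auto|right; auto|].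
  exfalso. apply (Ord_irrefl b Hb). apply Hs; exact H.
Qed.

Lemma ole_antisym a b : Ordinal a -> Ordinal b -> ole a b -> ole b a -> eqV a b.
Proof.
  intros Ha Hb [H|H] [H'|H']; try exact H; exfalso; apply (Ord_irrefl a Ha).
  - exact (Ord_trans a a b Ha H H').
  - exact (mem_eqV_r a b a H' H).
Qed.

Lemma Ord_of_trans a : Defs.transitive a -> (forall x, mem x a -> Ordinal x) -> Ordinal a.
Proof.
  intros Ht H. split; [exact Ht|split;[|split]].
  - intros x Hx. apply Ord_irrefl. auto.
  - intros x y z Hx Hy Hz Hxy Hyz. eapply Ord_trans; [apply (H z Hz) | exact Hxy | exact Hyz].
  - intros x y Hx Hy. apply Ord_tri; auto.
Qed.

Lemma mem_osucc_self a : mem a (osucc a).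
Proof. unfold osucc. apply mem_union. right. apply mem_single, eqV_refl. Qed.

Lemma mem_osucc_l x a : mem x a -> mem x (osucc a).
Proof. intro H. unfold osucc. apply mem_union. left. exact H. Qed.

Lemma ole_osucc x a : ole x a -> mem x (osucc a).
Proof.
  intros [H|H]. apply mem_osucc_l; auto.
  apply mem_eqV_l with a. apply eqV_sym; auto. apply mem_osucc_self.
Qed.

Lemma osucc_sub b r t : Ordinal b -> mem r b -> mem t (osucc r) -> mem t b.
Proof.
  intros Hb Hr Ht. unfold osucc in Ht. apply mem_union in Ht as [Ht|Ht].
  - eapply Ord_trans; eauto.
  - apply mem_single in Ht. apply mem_eqV_l with r; auto. apply eqV_sym; auto.
Qed.

Lemma Ord_osucc a : Ordinal a -> Ordinal (osucc a).
Proof.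
  intro Ha. apply Ord_of_trans.
  - intros y Hy z Hz. apply mem_osucc_l. unfold osucc in Hy.
    apply mem_union in Hy as [Hy|Hy].
    + exact (Ord_trans a z y Ha Hz Hy).
    + apply mem_single in Hy. exact (mem_eqV_r z y a Hy Hz).
  - intros x Hx. unfold osucc in Hx; apply mem_union in Hx. destruct Hx as [Hx|Hx].
    exact (Ord_elem a x Ha Hx). apply mem_single in Hx. apply Ord_eqV with a; [apply eqV_sym; auto | auto].
Qed.

Lemma Ord_bigunion X : (forall c, mem c X -> Ordinal c) -> Ordinal (bigunion X).
Proof.
  intro H. apply Ord_of_trans.
  - intros y Hy z Hz. apply mem_bigunion in Hy as [c [Hc Hyc]]. apply mem_bigunion.
    exists c. split; auto. eapply Ord_trans; eauto.
  - intros x Hx. apply mem_bigunion in Hx as [c [Hc Hxc]]. eapply Ord_elem; eauto.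
Qed.

Lemma IsRank_eqV x x' a : eqV x x' -> IsRank x a -> IsRank x' a.
Proof.
  intros E [Ho [Hs Hm]]. split; [auto|split].
  - eapply subset_eqV; [exact E|apply eqV_refl|exact Hs].
  - intros b Hb Hsb. apply Hm; auto.
    eapply subset_eqV; [apply eqV_sym, E|apply eqV_refl|exact Hsb].
Qed.

Lemma IsRank_unique x a a' : IsRank x a -> IsRank x a' -> eqV a a'.
Proof.
  intros [Ho [Hs Hm]] [Ho' [Hs' Hm']]. apply ole_antisym; auto.
Qed.

Lemma Vstage_mono c d : Defs.transitive d -> mem c d -> subset (Vstage c) (Vstage d).
Proof.
  intros Hd Hc t Ht. apply mem_Vstage in Ht as [e [He Hs]]. apply mem_Vstage.
  exists e. split; auto. exact (Hd c Hc e He).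
Qed.

Lemma R4a y a c : IsRank y a -> Ordinal c -> (subset y (Vstage c) <-> ole a c).
Proof.
  intros [Ho [Hs Hm]] Hc. split.
  - apply Hm; auto.
  - intros [H|H] t Ht.
    + apply Vstage_mono with a; [destruct Hc; auto | exact H | apply Hs; exact Ht].
    + eapply subset_eqV; [apply eqV_refl | apply Vstage_eqV; exact H | exact Hs | exact Ht].
Qed.

Lemma R4b y a b : IsRank y a -> Ordinal b -> (mem y (Vstage b) <-> mem a b).
Proof.
  intros HR Hb. split.
  - intro H. apply mem_Vstage in H as [c [Hc Hyc]].
    assert (Oc: Ordinal c) by (eapply Ord_elem; eauto).
    apply (proj1 (R4a y a c HR Oc)) in Hyc. destruct Hyc as [H|H].
    + eapply Ord_trans; eauto.
    + apply mem_eqV_l with c; auto. apply eqV_sym; auto.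
  - intro H. apply mem_Vstage. exists a. split; auto. destruct HR as [_ [Hs _]]; exact Hs.
Qed.

Lemma R4 x b : (forall y, mem y x -> IsRank y (rk y)) -> Ordinal b ->
  (subset x (Vstage b) <-> forall y, mem y x -> mem (rk y) b).
Proof.
  intros H Hb. split.
  - intros Hs y Hy. apply (proj1 (R4b y (rk y) b (H y Hy) Hb)). apply Hs; auto.
  - intros Hr y Hy. apply (proj2 (R4b y (rk y) b (H y Hy) Hb)). auto.
Qed.

Lemma rk_exists : forall x, exists a, IsRank x a.
Proof.
  intro x; pattern x; apply mem_ind; clear x; intros x IH.
  assert (HR : forall y, mem y x -> IsRank y (rk y)).
  { intros y Hy; unfold rk; apply epsilon_spec; auto. }
  set (a := bigunion (sup (idx x) (fun i => osucc (rk (el x i))))).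
  assert (Hel: forall i, mem (el x i) x) by (intro i; exists i; apply eqV_refl).
  assert (Ha : Ordinal a).
  { apply Ord_bigunion. intros c [i Hi]. apply Ord_eqV with (osucc (rk (el x i))).
    apply eqV_sym; exact Hi. apply Ord_osucc. destruct (HR _ (Hel i)) as [Ho _]; exact Ho. }
  exists a. split; [exact Ha| split].
  - apply R4; auto. intros y Hy. pose proof Hy as [i Hi].
    assert (E: eqV (rk y) (rk (el x i))).
    { apply IsRank_unique with y. exact (HR y Hy). apply IsRank_eqV with (el x i).
      apply eqV_sym; exact Hi. apply HR, Hel. }
    apply mem_bigunion. exists (osucc (rk (el x i))). split.
    exists i; apply eqV_refl. apply mem_eqV_l with (rk (el x i)). apply eqV_sym; exact E.
    apply mem_osucc_self.
  - intros b Hb Hsb. apply Ord_sub; auto. intros t Ht.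
    apply mem_bigunion in Ht as [c [[i Hi] Htc]].
    apply (mem_eqV_r _ _ _ Hi) in Htc.
    assert (rb : mem (rk (el x i)) b) by exact (proj1 (R4 x b HR Hb) Hsb (el x i) (Hel i)).
    eapply osucc_sub; eauto.
Qed.

Lemma rk_spec x : IsRank x (rk x).
Proof. unfold rk; apply epsilon_spec; apply rk_exists. Qed.

Lemma rk_ord x : Ordinal (rk x).
Proof. destruct (rk_spec x) as [H _]; exact H. Qed.

Lemma rk_mem x y : mem y x -> mem (rk y) (rk x).
Proof.
  intro Hy. destruct (rk_spec x) as [Ho [Hs _]].
  exact (proj1 (R4 x (rk x) (fun y _ => rk_spec y) Ho) Hs y Hy).
Qed.

Lemma rk_least x b : Ordinal b -> (forall y, mem y x -> mem (rk y) b) -> ole (rk x) b.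
Proof.
  intros Hb H. destruct (rk_spec x) as [Ho [Hs Hm]]. apply Hm; auto.
  apply (proj2 (R4 x b (fun y _ => rk_spec y) Hb)). exact H.
Qed.

Lemma rk_eqV x y : eqV x y -> eqV (rk x) (rk y).
Proof.
  intro E. apply IsRank_unique with x. apply rk_spec.
  apply IsRank_eqV with y. apply eqV_sym; auto. apply rk_spec.
Qed.

Lemma rk_char x a : Ordinal a -> (forall y, mem y x -> mem (rk y) a) ->
  (forall b, Ordinal b -> (forall y, mem y x -> mem (rk y) b) -> ole a b) -> eqV (rk x) a.
Proof.
  intros Ha H1 H2. apply ole_antisym; auto using rk_ord.
  apply rk_least; auto. apply H2. apply rk_ord. intros; apply rk_mem; auto.
Qed.

Lemma oadd_ord r n : Ordinal r -> Ordinal (oadd r n).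
Proof. intro H; induction n; simpl; auto using Ord_osucc. Qed.

Lemma Vn_Vars phi M Mbar t n u : Vn phi M Mbar t n u -> Vars phi u.
Proof. destruct n; simpl; tauto. Qed.

Lemma Mn0_in phi M Mbar t s v : Vn phi M Mbar t 0 v ->
  Mn phi M Mbar t s 0 v = union (M v) (single s).
Proof. intro H. simpl. destruct (excluded_middle_informative _) as [_|n]; [reflexivity| exfalso; exact (n H)]. Qed.

Lemma Mn0_out phi M Mbar t s v : ~ Vn phi M Mbar t 0 v -> Mn phi M Mbar t s 0 v = M v.
Proof. intro H. simpl. destruct (excluded_middle_informative _) as [h|_]; [exfalso; exact (H h)|reflexivity]. Qed.

Lemma MnS_in phi M Mbar t s m v : Vn phi M Mbar t (S m) v ->
  Mn phi M Mbar t s (S m) v =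
  union (Mn phi M Mbar t s m v)
        (sup {u : nat | Vn phi M Mbar t m u /\ mem (M u) (M v)}
             (fun u => Mn phi M Mbar t s m (proj1_sig u))).
Proof. intro H. simpl. destruct (excluded_middle_informative _) as [_|n]; [reflexivity| exfalso; exact (n H)]. Qed.

Lemma MnS_out phi M Mbar t s m v : ~ Vn phi M Mbar t (S m) v ->
  Mn phi M Mbar t s (S m) v = Mn phi M Mbar t s m v.
Proof. intro H. simpl. destruct (excluded_middle_informative _) as [h|_]; [exfalso; exact (H h)|reflexivity]. Qed.

Theorem lemma5 (phi : list lit) (M Mbar : nat -> V) (xb yb : nat) (t s : V) :
  satisfies M phi ->
  satisfies Mbar phi ->
  Vars phi xb -> Vars phi yb ->
  ~ eqV (Mbar xb) (Mbar yb) ->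
  ((mem t (Mbar xb) /\ ~ mem t (Mbar yb)) \/ (mem t (Mbar yb) /\ ~ mem t (Mbar xb))) ->
  (forall x, Vars phi x -> olt (rk (M x)) (rk s)) ->
  forall (n : nat) (v : nat), Vars phi v ->
    (Vn phi M Mbar t n v -> eqV (rk (Mn phi M Mbar t s n v)) (oadd (rk s) (S n))) /\
    (~ Vn phi M Mbar t n v -> ole (rk (Mn phi M Mbar t s n v)) (oadd (rk s) n)).
Proof.
  intros _ _ _ _ _ _ Hrk n.
  assert (Hr: Ordinal (rk s)) by apply rk_ord.
  induction n as [|m IH]; intros v Hv.
  - split; intro HV.
    + rewrite Mn0_in by exact HV. change (oadd (rk s) 1) with (osucc (rk s)).
      apply rk_char.
      * apply Ord_osucc; auto.
      * intros y Hy. apply mem_union in Hy as [Hy|Hy].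
        -- apply mem_osucc_l. eapply Ord_trans; [exact Hr| apply rk_mem; exact Hy | apply Hrk; exact Hv].
        -- apply mem_single in Hy. apply mem_eqV_l with (rk s).
           apply eqV_sym, rk_eqV; exact Hy. apply mem_osucc_self.
      * intros b Hb Hyb. apply Ord_sub; auto using Ord_osucc. intros u Hu.
        apply osucc_sub with (rk s); auto. apply Hyb.
        apply mem_union; right; apply mem_single, eqV_refl.
    + rewrite Mn0_out by exact HV. left. exact (Hrk v Hv).
  - assert (Hle: forall u, Vars phi u ->
              ole (rk (Mn phi M Mbar t s m u)) (oadd (rk s) (S m))).
    { intros u Hu. destruct (classic (Vn phi M Mbar t m u)) as [H|H].
      - right; apply (proj1 (IH u Hu)); auto.
      - left. change (oadd (rk s) (S m)) with (osucc (oadd (rk s) m)).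
        apply ole_osucc. apply (proj2 (IH u Hu)); auto. }
    split; intro HV.
    + rewrite MnS_in by exact HV.
      change (oadd (rk s) (S (S m))) with (osucc (oadd (rk s) (S m))).
      apply rk_char.
      * apply Ord_osucc, oadd_ord; auto.
      * intros y Hy. apply mem_union in Hy as [Hy|Hy].
        -- apply mem_osucc_l. destruct (Hle v Hv) as [H|H].
           ++ eapply Ord_trans; [apply oadd_ord; exact Hr | apply rk_mem; exact Hy | exact H].
           ++ apply mem_eqV_r with (rk (Mn phi M Mbar t s m v)); auto. apply rk_mem; auto.
        -- destruct Hy as [[u [Hu1 Hu2]] Hyu]. simpl in Hyu.
           apply mem_eqV_l with (oadd (rk s) (S m)).
           ++ apply eqV_sym. eapply eqV_trans. apply rk_eqV; exact Hyu.
              apply (proj1 (IH u (Vn_Vars _ _ _ _ _ _ Hu1))). exact Hu1.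
           ++ apply mem_osucc_self.
      * intros b Hb Hyb. apply Ord_sub; auto using Ord_osucc, oadd_ord. intros z Hz.
        apply osucc_sub with (oadd (rk s) (S m)); auto.
        destruct HV as [_ [e [He [w [Hw Hew]]]]].
        assert (Hmw: mem (M w) (M v)) by exact (mem_eqV_l _ _ _ Hew He).
        apply mem_eqV_l with (rk (Mn phi M Mbar t s m w)).
        apply (proj1 (IH w (Vn_Vars _ _ _ _ _ _ Hw))); exact Hw.
        apply Hyb. apply mem_union. right.
        exists (exist (fun u => Vn phi M Mbar t m u /\ mem (M u) (M v)) w (conj Hw Hmw)).
        apply eqV_refl.
    + rewrite MnS_out by exact HV. apply Hle; auto.
Qed.
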